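(* Let $T$ be a triangle with diameter $h_T$, maximum angle $\theta_M\in(0,\pi)$, edges $e_1,e_2,e_3$ and corresponding unit tangent vectors $\mathbf t_1,\mathbf t_2,\mathbf t_3$. Then $$\|\nabla v_h\|_{0,T}\le\frac{h_T^{1/2}}{\sqrt{2\sin(\theta_M)}}\sum_{i=1}^3\|\nabla v_h\cdot\mathbf t_i\|_{L^2(e_i)}\qquad\forall v_h\in\mathcal P_1(T).$$
   Context: $\mathcal P_1(T)$ is the space of affine functions on $T$. *)

(* Defs.v *)
From HB Require Import structures.
From mathcomp Require Import all_boot all_order all_algebra.
From mathcomp Require Import all_classical all_reals all_analysis.
Set Implicit Arguments. Unset Strict Implicit. Unset Printing Implicit Defensive.
Import Order.TTheory GRing.Theory Num.Theory.
Import numFieldNormedType.Exports.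
Local Open Scope classical_set_scope.
Local Open Scope ring_scope.

Section Defs.
Variable R : realType.
Implicit Types (p q a b c : R * R).

Definition dot2 p q : R := p.1 * q.1 + p.2 * q.2.
Definition enorm2 p : R := Num.sqrt (dot2 p p).
Definition edist2 p q : R := enorm2 (q - p).

Definition nondegenerate_tri a b c : Prop :=
  (b.1 - a.1) * (c.2 - a.2) - (b.2 - a.2) * (c.1 - a.1) != 0.

Definition triangle a b c : set (R * R) :=
  [set x | exists l1 l2 l3 : R, [/\ 0 <= l1, 0 <= l2, 0 <= l3,
     l1 + l2 + l3 = 1 & x = l1 *: a + l2 *: b + l3 *: c]].

Definition set_diameter (S : set (R * R)) : R :=
  sup [set edist2 x y | x in S & y in S].

Definition angle_at a b c : R :=
  acos (dot2 (b - a) (c - a) / (enorm2 (b - a) * enorm2 (c - a))).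

Definition max_angle a b c : R :=
  Num.max (angle_at a b c) (Num.max (angle_at b c a) (angle_at c a b)).

Definition unit_tangent a b : R * R := (enorm2 (b - a))^-1 *: (b - a).

Definition P1 (v : R * R -> R) : Prop :=
  exists (g1 g2 k : R), forall x, v x = g1 * x.1 + g2 * x.2 + k.

Definition grad2 (v : R * R -> R) (x : R * R) : R * R :=
  ('D_((1, 0) : R * R) v x, 'D_((0, 1) : R * R) v x).

Definition leb2 := ((@lebesgue_measure R) \x (@lebesgue_measure R))%E.

Definition L2norm_vec (S : set (R * R)) (F : R * R -> R * R) : R :=
  Num.sqrt (fine (\int[leb2]_(x in S) ((dot2 (F x) (F x))%R%:E))%E).

(** L^2 norm of a scalar function on the segment [a,b], w.r.t. arc length. *)
Definition L2norm_edge a b (f : R * R -> R) : R :=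
  Num.sqrt (fine (\int[@lebesgue_measure R]_(s in `[0%R, 1%R]%classic)
                    ((f (a + s *: (b - a)) ^+ 2 * edist2 a b)%R%:E))%E).
End Defs.

(* Main.v *)
Require Import Defs.
From HB Require Import structures.
From mathcomp Require Import all_boot all_order all_algebra.
From mathcomp Require Import all_classical all_reals all_analysis.
From mathcomp Require Import ring lra measurable_realfun.
Import Order.TTheory GRing.Theory Num.Theory.
Import numFieldNormedType.Exports.
Set Implicit Arguments. Unset Strict Implicit. Unset Printing Implicit Defensive.
Local Open Scope ring_scope.
Section S1. Local Open Scope classical_set_scope. Variable R : realType.
Local Notation leb := (@lebesgue_measure R).

Lemma int_lin (p q al be : R) : p < q ->
  (\int[@lebesgue_measure R]_(x in `[p, q]) (al * x + be)%:E =
   (al * (q ^+ 2 - p ^+ 2) / 2 + be * (q - p))%:E)%E.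
Proof.
move=> pq.
pose F := fun x : R => al * (x ^+ 2 / 2) + be * x.
have dF : forall x : R, is_derive x 1 F (al * x + be).
  move=> x. rewrite /F.
  apply: is_derive_eq.
  by rewrite !scaler0 /GRing.scale /=; field.
transitivity ((F q)%:E - (F p)%:E)%E; last first.
  by rewrite -EFinB /F; congr EFin; field.
apply: continuous_FTC2 => //.
- apply: continuous_subspaceT => x.
  apply: continuousD; last exact: cvg_cst.
  apply: continuousM; first exact: cvg_cst.
  exact: cvg_id.
- split.
  + by move=> z _; exact: ex_derive.
  + apply/cvg_at_right_filter.
    by apply/differentiable_continuous/derivable1_diffP; exact: ex_derive.
  + apply/cvg_at_left_filter.
    by apply/differentiable_continuous/derivable1_diffP; exact: ex_derive.
- by move=> z _; rewrite derive1E; apply: derive_val.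
Qed.

Lemma derive_aff (g1 g2 k : R) (x d : R * R) :
  'D_d (fun y : R * R => g1 * y.1 + g2 * y.2 + k) x = g1 * d.1 + g2 * d.2.
Proof.
rewrite /derive; apply: cvg_lim => //.
apply: cvg_trans (cvg_cst (g1 * d.1 + g2 * d.2)).
apply: near_eq_cvg; near=> h.
have h0 : h != 0 by near: h; exact: nbhs_dnbhs_neq.
rewrite /GRing.scale /= /GRing.scale /=; field; exact: h0.
Unshelve. all: try by end_near. all: exact: _. Qed.


Lemma meas_seg (S : set R) (m K L : R) : 0 <= L ->
  (forall y, S y -> exists l, [/\ 0 <= l, l <= L & y = m + l * K]) ->
  (leb S <= (`|K| * L)%:E)%E.
Proof.
move=> L0 HS.
pose lo := m + Num.min 0 (K * L).
apply: (@le_trans _ _ (leb `[lo, lo + `|K| * L])).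
  apply: le_outer_measure. 
  move=> y /HS [l [l0 lL ->]]; rewrite /= in_itv /= /lo.
  have [K0|K0] := leP 0 K.
    rewrite ger0_norm // (_ : Num.min 0 (K * L) = 0); last first.
      by apply/min_idPl; rewrite mulr_ge0.
    apply/andP; split; nra.
  rewrite ltr0_norm // (_ : Num.min 0 (K * L) = K * L); last first.
    apply/min_idPr; rewrite nmulr_rle0 // ltW.
  apply/andP; split; nra.
rewrite lebesgue_measure_itv /=.
case: ifP => _; last by rewrite lee_fin mulr_ge0.
by rewrite -EFinB lee_fin; lra.
Qed.

Implicit Types (a b c : R * R).
Definition Dt a b c : R := (b.1 - a.1) * (c.2 - a.2) - (b.2 - a.2) * (c.1 - a.1).
Lemma sc1 (l : R) (p : R * R) : (l *: p).1 = l * p.1. Proof. by []. Qed.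
Lemma sc2 (l : R) (p : R * R) : (l *: p).2 = l * p.2. Proof. by []. Qed.
Lemma ad1 (p q : R * R) : (p + q).1 = p.1 + q.1. Proof. by []. Qed.
Lemma ad2 (p q : R * R) : (p + q).2 = p.2 + q.2. Proof. by []. Qed.

Lemma sec_form a b c (x y : R) : a.1 <= b.1 -> b.1 <= c.1 -> a.1 < c.1 ->
  triangle a b c (x, y) ->
  exists l, [/\ 0 <= l, a.1 <= x <= c.1, l * (b.1 - a.1) <= x - a.1,
     l * (c.1 - b.1) <= c.1 - x &
     y = (a.2 + (x - a.1) * (c.2 - a.2) / (c.1 - a.1)) + l * (- Dt a b c / (c.1 - a.1))].
Proof.
move=> hab hbc hac [l1 [l2 [l3 [l10 l20 l30 hs E]]]].
have ex : x = l1 * a.1 + l2 * b.1 + l3 * c.1 by rewrite -[x]/((x, y).1) E.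
have ey : y = l1 * a.2 + l2 * b.2 + l3 * c.2 by rewrite -[y]/((x, y).2) E.
have e1 : l1 = 1 - l2 - l3 by lra.
exists l2; split => //.
- rewrite ex e1; apply/andP; split; nra.
- rewrite ex e1; nra.
- rewrite ex e1; nra.
- rewrite ey ex e1 /Dt; field; lra.
Qed.

Definition lam2 a b c x : R := ((x.1 - a.1) * (c.2 - a.2) - (x.2 - a.2) * (c.1 - a.1)) / Dt a b c.
Definition lam3 a b c x : R := ((b.1 - a.1) * (x.2 - a.2) - (b.2 - a.2) * (x.1 - a.1)) / Dt a b c.

Lemma sb1 (p q : R * R) : (p - q).1 = p.1 - q.1. Proof. by []. Qed.
Lemma sb2 (p q : R * R) : (p - q).2 = p.2 - q.2. Proof. by []. Qed.

Lemma tri_char a b c : Dt a b c != 0 ->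
  triangle a b c = [set x | 0 <= lam2 a b c x /\ 0 <= lam3 a b c x /\ 0 <= 1 - lam2 a b c x - lam3 a b c x].
Proof.
move=> D0; apply/seteqP; split => x /=.
  move=> [l1 [l2 [l3 [l10 l20 l30 hs ->]]]].
  have e2 : lam2 a b c (l1 *: a + l2 *: b + l3 *: c) = l2.
    rewrite /lam2 /=. rewrite /Dt in D0 *. rewrite /GRing.scale /=. 
    have -> : l1 = 1 - l2 - l3 by lra.
    by field.
  have e3 : lam3 a b c (l1 *: a + l2 *: b + l3 *: c) = l3.
    rewrite /lam3 /=. rewrite /Dt in D0 *. rewrite /GRing.scale /=. 
    have -> : l1 = 1 - l2 - l3 by lra.
    by field.
  rewrite e2 e3; split => //; split => //; lra.
move=> [h2 [h3 h1]].
exists (1 - lam2 a b c x - lam3 a b c x), (lam2 a b c x), (lam3 a b c x).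
split => //; first lra.
apply: injective_projections; rewrite !(ad1, ad2, sc1, sc2) /lam2 /lam3;
  rewrite /Dt in D0 *; field => //.
Qed.

Lemma meas_aff (al be ga : R) :
  measurable_fun setT (fun x : R * R => al * x.1 + be * x.2 + ga).
Proof.
apply: measurable_realfun.measurable_funD => //; apply: measurable_realfun.measurable_funD => //;
 apply: measurable_realfun.measurable_funM => //.
Qed.

Lemma meas_ge0 (f : R * R -> R) : measurable_fun setT f ->
  measurable [set x | 0 <= f x].
Proof.
move=> mf; have := mf measurableT `[0, +oo[%classic (measurable_itv _).
rewrite setTI; congr measurable; apply/seteqP; split => x /=;
  by rewrite in_itv /= andbT.
Qed.

Lemma tri_meas a b c : Dt a b c != 0 -> measurable (triangle a b c).
Proof.
move=> D0; rewrite tri_char //.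
have E : [set x | 0 <= lam2 a b c x /\ 0 <= lam3 a b c x /\ 0 <= 1 - lam2 a b c x - lam3 a b c x]
  = [set x | 0 <= lam2 a b c x] `&` ([set x | 0 <= lam3 a b c x] `&` [set x | 0 <= 1 - lam2 a b c x - lam3 a b c x]) by [].
rewrite E; apply: measurableI; last apply: measurableI; apply: meas_ge0.
- rewrite (_ : lam2 a b c = fun x => ((c.2 - a.2)/Dt a b c) * x.1 + (-(c.1 - a.1)/Dt a b c) * x.2 + (- a.1 * (c.2 - a.2) + a.2 * (c.1 - a.1))/Dt a b c); first exact: meas_aff.
  by apply/funext => x; rewrite /lam2; field.
- rewrite (_ : lam3 a b c = fun x => (-(b.2 - a.2)/Dt a b c) * x.1 + ((b.1 - a.1)/Dt a b c) * x.2 + (- a.2 * (b.1 - a.1) + a.1 * (b.2 - a.2))/Dt a b c); first exact: meas_aff.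
  by apply/funext => x; rewrite /lam3; field.
- rewrite (_ : (fun x => 1 - lam2 a b c x - lam3 a b c x) = fun x => (-(c.2 - a.2)/Dt a b c + (b.2 - a.2)/Dt a b c) * x.1 + ((c.1 - a.1)/Dt a b c - (b.1 - a.1)/Dt a b c) * x.2 + (1 - (- a.1 * (c.2 - a.2) + a.2 * (c.1 - a.1))/Dt a b c - (- a.2 * (b.1 - a.1) + a.1 * (b.2 - a.2))/Dt a b c)); first exact: meas_aff.
  by apply/funext => x; rewrite /lam2 /lam3; field.
Qed.
End S1.

Section S2. Local Open Scope classical_set_scope. Variable R : realType.
Implicit Types (a b c : R * R).
Local Notation leb := (@lebesgue_measure R).

Lemma meas_sorted a b c : a.1 <= b.1 -> b.1 <= c.1 -> Dt a b c != 0 ->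
  (@leb2 R (triangle a b c) <= (`|Dt a b c| / 2)%:E)%E.
Proof.
move=> hab hbc D0.
have hac : a.1 < c.1.
  rewrite lt_neqAle (le_trans hab hbc) andbT; apply: contraNneq D0 => e.
  have e1 : b.1 = a.1 by apply/eqP; rewrite eq_le hab e hbc.
  by rewrite /Dt e1 -e !subrr !mul0r mulr0 subrr.
set T := triangle a b c.
have mT : measurable T by exact: tri_meas.
set K := - Dt a b c / (c.1 - a.1).
have secT : forall x y, xsection T x y -> exists l, [/\ 0 <= l, a.1 <= x <= c.1, l * (b.1 - a.1) <= x - a.1,
     l * (c.1 - b.1) <= c.1 - x &
     y = (a.2 + (x - a.1) * (c.2 - a.2) / (c.1 - a.1)) + l * K].
  move=> x y; rewrite /xsection /= inE => /sec_form; exact.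
rewrite /leb2 /product_measure1 /=.
set phi := fun x => leb (xsection T x).
have mphi := measurable_fun_xsection (T1 := g_sigma_algebraType R.-ocitv.-measurable) leb mT.
have phi0 : forall x, (0 <= phi x)%E by move=> x; exact: measure_ge0.
have E1 : (\int[leb]_x phi x = \int[leb]_(x in `[a.1, c.1]) phi x)%E.
  rewrite [RHS]integral_mkcond; apply: eq_integral => x _.
  rewrite /patch; case: ifP => // /negbT xn.
  rewrite /phi (_ : xsection T x = set0) ?measure0 //.
  apply/seteqP; split => // y /secT [l [_ hx _ _ _]].
  by apply: (negP xn); apply: mem_set; rewrite /= in_itv /= hx.
rewrite E1.
have E2 : (`[a.1, c.1] = `[a.1, b.1[ `|` `[b.1, c.1])%classic.
  apply/seteqP; split => x /=; rewrite !in_itv /=.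
    move=> /andP[h1 h2]; have [xb|xb] := ltP x b.1.
      by left; apply/andP; split.
    by right; apply/andP; split.
  by move=> [/andP[h1 h2]|/andP[h1 h2]]; apply/andP; split => //; lra.
rewrite E2 ge0_integral_setU //; last 2 first.
- exact: measurable_funS mphi.
- apply/disj_setPS => x [/=]; rewrite !in_itv /= => /andP[_ h1] /andP[h2 _]; lra.
have mlin : forall al be : R, measurable_fun setT (fun x : R => (al * x + be)%:E).
  move=> al be; apply/measurable_EFinP.
  apply: measurable_realfun.measurable_funD => //.
have P1 : (\int[leb]_(x in `[a.1, b.1[) phi x <= (`|K| * (b.1 - a.1) / 2)%:E)%E.
  have [ab|ab] := ltP a.1 b.1; last first.
    have e : b.1 = a.1 by apply/eqP; rewrite eq_le ab hab.
    rewrite set_itv_ge; last by rewrite bnd_simp -leNgt e.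
    by rewrite integral_set0 e subrr mulr0 mul0r.
  apply: (@le_trans _ _ (\int[leb]_(x in `[a.1, b.1[) ((`|K| / (b.1 - a.1)) * x + (- (`|K| * a.1 / (b.1 - a.1))))%:E)%E).
    apply: ge0_le_integral => //.
    - exact: measurable_funS mphi.
    - exact: measurable_funS (mlin _ _).
    move=> x; rewrite /= in_itv /= => /andP[xa xb].
    have -> : `|K| / (b.1 - a.1) * x + - (`|K| * a.1 / (b.1 - a.1)) = `|K| * ((x - a.1) / (b.1 - a.1)).
      by field; rewrite subr_eq0 gt_eqF.
    apply: meas_seg; first by apply: divr_ge0; lra.
    move=> y /secT [l [l0 hx h1 h2 ->]]; exists l; split => //.
    by rewrite ler_pdivlMr ?subr_gt0.
  rewrite integral_itv_bndo_bndc; last exact: measurable_funS (mlin _ _).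
  rewrite int_lin // lee_fin le_eqVlt; apply/orP; left; apply/eqP.
  by field; rewrite subr_eq0 gt_eqF.
have P2 : (\int[leb]_(x in `[b.1, c.1]) phi x <= (`|K| * (c.1 - b.1) / 2)%:E)%E.
  have [bc|bc] := ltP b.1 c.1; last first.
    have e : c.1 = b.1 by apply/eqP; rewrite eq_le bc hbc.
    rewrite e set_itv1.
    by rewrite integral_set1 subrr mulr0 mul0r.
  apply: (@le_trans _ _ (\int[leb]_(x in `[b.1, c.1]) ((- (`|K| / (c.1 - b.1))) * x + (`|K| * c.1 / (c.1 - b.1)))%:E)%E).
    apply: ge0_le_integral => //.
    - exact: measurable_funS mphi.
    - exact: measurable_funS (mlin _ _).
    move=> x; rewrite /= in_itv /= => /andP[xa xb].
    have -> : - (`|K| / (c.1 - b.1)) * x + `|K| * c.1 / (c.1 - b.1) = `|K| * ((c.1 - x) / (c.1 - b.1)).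
      by field; rewrite subr_eq0 gt_eqF.
    apply: meas_seg; first by apply: divr_ge0; lra.
    move=> y /secT [l [l0 hx h1 h2 ->]]; exists l; split => //.
    by rewrite ler_pdivlMr ?subr_gt0.
  rewrite int_lin // lee_fin le_eqVlt; apply/orP; left; apply/eqP.
  by field; rewrite subr_eq0 gt_eqF.
apply: le_trans (leeD P1 P2) _.
rewrite -EFinD lee_fin le_eqVlt; apply/orP; left; apply/eqP.
rewrite /K normrM normrN normfV (@gtr0_norm _ (c.1 - a.1)); last by rewrite subr_gt0.
by field; rewrite subr_eq0 gt_eqF.
Qed.
End S2.

Section S3. Local Open Scope classical_set_scope. Variable R : realType.
Implicit Types (a b c : R * R).

Lemma tri_sw12 a b c : triangle a b c = triangle b a c.
Proof.
apply/seteqP; split => x [l1 [l2 [l3 [h1 h2 h3 hs ->]]]].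
  exists l2, l1, l3; split => //; first lra; by rewrite (addrC (l1 *: _)).
exists l2, l1, l3; split => //; first lra; by rewrite (addrC (l1 *: _)).
Qed.
Lemma tri_sw23 a b c : triangle a b c = triangle a c b.
Proof.
apply/seteqP; split => x [l1 [l2 [l3 [h1 h2 h3 hs ->]]]].
  exists l1, l3, l2; split => //; first lra; by rewrite -!addrA (addrC (l2 *: _)).
exists l1, l3, l2; split => //; first lra; by rewrite -!addrA (addrC (l3 *: _)).
Qed.
Lemma Dt_sw12 a b c : Dt b a c = - Dt a b c.
Proof. rewrite /Dt; ring. Qed.
Lemma Dt_sw23 a b c : Dt a c b = - Dt a b c.
Proof. rewrite /Dt; ring. Qed.

Definition Q a b c := Dt a b c != 0 -> (@leb2 R (triangle a b c) <= (`|Dt a b c| / 2)%:E)%E.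
Lemma Q12 a b c : Q a b c -> Q b a c.
Proof. by rewrite /Q tri_sw12 Dt_sw12 normrN oppr_eq0 => h. Qed.
Lemma Q23 a b c : Q a b c -> Q a c b.
Proof. by rewrite /Q tri_sw23 Dt_sw23 normrN oppr_eq0 => h. Qed.

Lemma meas_tri a b c : Dt a b c != 0 ->
  (@leb2 R (triangle a b c) <= (`|Dt a b c| / 2)%:E)%E.
Proof.
have S : forall a b c, a.1 <= b.1 -> b.1 <= c.1 -> Q a b c.
  by move=> ? ? ? h1 h2; exact: meas_sorted.
rewrite -/(Q a b c).
have [ab|ba] := leP a.1 b.1.
  have [bc|cb] := leP b.1 c.1; first exact: S.
  have [ac|ca] := leP a.1 c.1.
    by apply: Q23; apply: S => //; exact: ltW.
  by apply: Q23; apply: Q12; apply: S => //; exact: ltW.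
have [ac|ca] := leP a.1 c.1.
  by apply: Q12; apply: S => //; exact: ltW.
have [bc|cb] := leP b.1 c.1.
  by apply: Q12; apply: Q23; apply: S => //; exact: ltW.
by apply: Q12; apply: Q23; apply: Q12; apply: S => //; exact: ltW.
Qed.
End S3.

Section S4. Local Open Scope classical_set_scope. Variable R : realType.
Local Notation sqrt := Num.sqrt.

Lemma sqrt_fact (A B C S : R) : 0 <= A -> 0 <= B -> 0 < C -> 0 <= S ->
  A * C <= B * S ^+ 2 -> sqrt A <= sqrt B / sqrt C * S.
Proof.
move=> A0 B0 C0 S0 h.
have -> : sqrt B / sqrt C * S = sqrt (B * S ^+ 2 / C).
  rewrite sqrtrM ?mulr_ge0 ?sqr_ge0 // sqrtrM ?sqr_ge0 // sqrtrV ?ltW //.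
  by rewrite sqrtr_sqr ger0_norm // mulrAC.
rewrite ler_sqrt; last by rewrite divr_ge0 ?mulr_ge0 ?sqr_ge0 // ltW.
by rewrite ler_pdivlMr.
Qed.

Lemma core (G D h U W A B S : R) : 0 <= G -> D != 0 -> 0 < U -> 0 < W ->
  U <= h -> W <= h -> 0 <= A -> 0 <= B ->
  G * D ^+ 2 <= (A * W + B * U) ^+ 2 ->
  A / U * sqrt U + B / W * sqrt W <= S ->
  sqrt (G * `|D| / 2) <= sqrt h / sqrt (2 * (`|D| / (U * W))) * S.
Proof.
move=> G0 D0 U0 W0 Uh Wh A0 B0 HG HS.
have Dp : 0 < `|D| by rewrite normr_gt0.
have D2 : D ^+ 2 = `|D| ^+ 2 by rewrite real_normK // num_real.
set sU := sqrt U; set sW := sqrt W; set sh := sqrt h.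
have sU0 : 0 < sU by rewrite sqrtr_gt0.
have sW0 : 0 < sW by rewrite sqrtr_gt0.
have eU : U = sU ^+ 2 by rewrite sqr_sqrtr // ltW.
have eW : W = sW ^+ 2 by rewrite sqr_sqrtr // ltW.
have h0 : 0 <= h by apply: le_trans Uh; exact: ltW.
have eh : h = sh ^+ 2 by rewrite sqr_sqrtr.
have sUh : sU <= sh by rewrite ler_sqrt.
have sWh : sW <= sh by rewrite ler_sqrt.
set al := A / sU; set be := B / sW.
have eA : A = al * sU by rewrite /al mulfVK // gt_eqF.
have eB : B = be * sW by rewrite /be mulfVK // gt_eqF.
have al0 : 0 <= al by rewrite divr_ge0 // ltW.
have be0 : 0 <= be by rewrite divr_ge0 // ltW.
have eS1 : A / U * sU = al.
  by rewrite eA eU /al; field; rewrite gt_eqF.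
have eS2 : B / W * sW = be.
  by rewrite eB eW /be; field; rewrite gt_eqF.
rewrite eS1 eS2 in HS.
have S0 : 0 <= S by apply: le_trans HS; exact: addr_ge0.
apply: sqrt_fact => //.
- by apply: mulr_ge0 => //; apply: mulr_ge0 => //; exact: ltW.
- by apply: mulr_gt0 => //; apply: divr_gt0 => //; exact: mulr_gt0.
have key : G * `|D| ^+ 2 <= sU ^+ 2 * sW ^+ 2 * (sh * S) ^+ 2.
  rewrite -D2; apply: le_trans HG _.
  rewrite eA eB eU eW.
  have -> : (al * sU * sW ^+ 2 + be * sW * sU ^+ 2) = sU * sW * (al * sW + be * sU) by ring.
  rewrite -[sU ^+ 2 * sW ^+ 2]exprMn [X in X <= _]exprMn; apply: ler_wpM2l; first by rewrite sqr_ge0.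
  rewrite ler_sqr ?nnegrE; [| by apply: addr_ge0; apply: mulr_ge0 => //; exact: ltW |].
    by nra.
  by apply: mulr_ge0 => //; rewrite sqrtr_ge0.
rewrite -eU -eW exprMn -eh in key.
have -> : G * `|D| / 2 * (2 * (`|D| / (U * W))) = G * `|D| ^+ 2 / (U * W).
  by field; rewrite !gt_eqF.
rewrite ler_pdivrMr; last exact: mulr_gt0.
by nra.
Qed.
End S4.

Section S5. Local Open Scope classical_set_scope. Variable R : realType.
Local Notation sqrt := Num.sqrt.
Implicit Types (g u w : R * R).
Definition cross u w : R := u.1 * w.2 - u.2 * w.1.

Lemma en_sq u : enorm2 u ^+ 2 = dot2 u u.
Proof. by rewrite /enorm2 sqr_sqrtr // /dot2 addr_ge0 // -expr2 sqr_ge0. Qed.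
Lemma en_ge0 u : 0 <= enorm2 u.
Proof. exact: sqrtr_ge0. Qed.

Lemma cs u w : `|dot2 u w| <= enorm2 u * enorm2 w.
Proof.
rewrite -(ler_pXn2r (n := 2)) ?nnegrE ?mulr_ge0 ?en_ge0 //.
rewrite exprMn !en_sq real_normK ?num_real // /dot2.
have : 0 <= (u.1 * w.2 - u.2 * w.1) ^+ 2 by exact: sqr_ge0.
nra.
Qed.

Lemma lag g u w : dot2 g g * cross u w ^+ 2 <=
  (`|dot2 g u| * enorm2 w + `|dot2 g w| * enorm2 u) ^+ 2.
Proof.
have c := cs u w.
set x := dot2 g u; set y := dot2 g w; set U := enorm2 u; set W := enorm2 w.
have e : dot2 g g * cross u w ^+ 2 = x ^+ 2 * W ^+ 2 + y ^+ 2 * U ^+ 2 - 2 * x * y * dot2 u w.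
  by rewrite /W /U !en_sq /x /y /dot2 /cross; ring.
rewrite e.
have hx : `|x| ^+ 2 = x ^+ 2 by rewrite real_normK ?num_real.
have hy : `|y| ^+ 2 = y ^+ 2 by rewrite real_normK ?num_real.
have U0 : 0 <= U by exact: en_ge0.
have W0 : 0 <= W by exact: en_ge0.
have h1 : - (`|x| * `|y| * `|dot2 u w|) <= x * y * dot2 u w.
  have := ler_norm (- (x * y * dot2 u w)); rewrite normrN !normrM; lra.
have h2 : `|x| * `|y| * `|dot2 u w| <= `|x| * `|y| * (U * W).
  by apply: ler_wpM2l => //; rewrite mulr_ge0.
nra.
Qed.

Lemma sin_angle u w : cross u w != 0 ->
  sin (acos (dot2 u w / (enorm2 u * enorm2 w))) = `|cross u w| / (enorm2 u * enorm2 w).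
Proof.
move=> c0.
have U0 : 0 < enorm2 u.
  rewrite lt_neqAle en_ge0 andbT eq_sym; apply: contraNneq c0 => /eqP.
  rewrite /enorm2 sqrtr_eq0 /dot2 => h.
  have h1 : u.1 = 0 by nra.
  have h2 : u.2 = 0 by nra.
  by rewrite /cross h1 h2 !mul0r subrr.
have W0 : 0 < enorm2 w.
  rewrite lt_neqAle en_ge0 andbT eq_sym; apply: contraNneq c0 => /eqP.
  rewrite /enorm2 sqrtr_eq0 /dot2 => h.
  have h1 : w.1 = 0 by nra.
  have h2 : w.2 = 0 by nra.
  by rewrite /cross h1 h2 !mulr0 subrr.
have P : 0 < enorm2 u * enorm2 w by exact: mulr_gt0.
rewrite sin_acos; last first.
  rewrite -ler_norml normrM normfV (gtr0_norm P) ler_pdivrMr // mul1r.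
  exact: cs.
have -> : 1 - (dot2 u w / (enorm2 u * enorm2 w)) ^+ 2 = (cross u w / (enorm2 u * enorm2 w)) ^+ 2.
  rewrite !expr_div_n exprMn !en_sq.
  have d0 : dot2 u u * dot2 w w != 0.
    by rewrite -!en_sq -exprMn expf_neq0 // gt_eqF.
  apply: (@mulIf _ (dot2 u u * dot2 w w)) => //.
  rewrite mulrBl mul1r !divfK //.
  by rewrite /dot2 /cross; ring.
by rewrite sqrtr_sqr normrM normfV (gtr0_norm P).
Qed.
End S5.

Section S6. Local Open Scope classical_set_scope. Variable R : realType.
Local Notation sqrt := Num.sqrt.
Implicit Types (a b c p q : R * R).

Lemma edge_val p q (s : R) : L2norm_edge p q (fun _ => s) = `|s| * sqrt (edist2 p q).
Proof.
rewrite /L2norm_edge integral_cst //= lebesgue_measure_itv /= lte_fin ltr01 oppr0 adde0 mule1 /=.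
rewrite sqrtrM ?sqr_ge0 // sqrtr_sqr //.
Qed.

Lemma lhs_bound a b c (g : R * R) : nondegenerate_tri a b c ->
  (@leb2 R (triangle a b c) <= (`|((b.1 - a.1) * (c.2 - a.2) - (b.2 - a.2) * (c.1 - a.1))| / 2)%:E)%E ->
  measurable (triangle a b c) ->
  L2norm_vec (triangle a b c) (fun _ => g) <=
  sqrt (dot2 g g * `|((b.1 - a.1) * (c.2 - a.2) - (b.2 - a.2) * (c.1 - a.1))| / 2).
Proof.
move=> _ hm mT.
rewrite /L2norm_vec integral_cst //.
change ((lebesgue_measure \x lebesgue_measure)%E (triangle a b c)) with (@leb2 R (triangle a b c)).
have G0 : 0 <= dot2 g g by rewrite /dot2 addr_ge0 // -expr2 sqr_ge0.
rewrite ler_sqrt; last by rewrite mulr_ge0 // mulr_ge0.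
have m0 : (0 <= @leb2 R (triangle a b c))%E by exact: measure_ge0.
case E: (@leb2 R (triangle a b c)) hm m0 => [m| |] //=.
rewrite !lee_fin => hm m0.
move: E; rewrite /leb2 => ->.
rewrite /= -mulrA; exact: ler_wpM2l.
Qed.

Lemma vert_in a b c : [/\ triangle a b c a, triangle a b c b & triangle a b c c].
Proof.
split.
- exists 1, 0, 0; split => //; first by rewrite !addr0.
  by rewrite !scale0r !addr0 scale1r.
- exists 0, 1, 0; split => //; first by rewrite addr0 add0r.
  by rewrite !scale0r addr0 add0r scale1r.
- exists 0, 0, 1; split => //; first by rewrite !add0r.
  by rewrite !scale0r !add0r scale1r.
Qed.

Lemma diam_ge a b c p q : triangle a b c p -> triangle a b c q ->
  edist2 p q <= set_diameter (triangle a b c).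
Proof.
move=> Tp Tq; apply: ub_le_sup; last by exists p => //; exists q.
set M1 := `|a.1| + `|b.1| + `|c.1|; set M2 := `|a.2| + `|b.2| + `|c.2|.
have bnd : forall x, triangle a b c x -> `|x.1| <= M1 /\ `|x.2| <= M2.
  move=> x [l1 [l2 [l3 [h1 h2 h3 hs ->]]]]; rewrite /= /M1 /M2.
  split.
  - rewrite (le_trans (ler_normD _ _)) // (le_trans (lerD (ler_normD _ _) (lexx _))) //.
    rewrite !normrM !(ger0_norm h1) !(ger0_norm h2) !(ger0_norm h3).
    have := normr_ge0 a.1; have := normr_ge0 b.1; have := normr_ge0 c.1; nra.
  - rewrite (le_trans (ler_normD _ _)) // (le_trans (lerD (ler_normD _ _) (lexx _))) //.
    rewrite !normrM !(ger0_norm h1) !(ger0_norm h2) !(ger0_norm h3).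
    have := normr_ge0 a.2; have := normr_ge0 b.2; have := normr_ge0 c.2; nra.
exists (2 * M1 + 2 * M2) => _ [x Tx [y Ty <-]].
have [hx1 hx2] := bnd x Tx; have [hy1 hy2] := bnd y Ty.
have M10 : 0 <= M1 by apply: le_trans hx1.
have M20 : 0 <= M2 by apply: le_trans hx2.
rewrite /edist2 /enorm2 -[X in _ <= X]ger0_norm ?addr_ge0 ?mulr_ge0 //.
rewrite -sqrtr_sqr ler_sqrt ?sqr_ge0 // /dot2 /=.
have e1 : `|y.1 - x.1| <= 2 * M1 by rewrite (le_trans (ler_normB _ _)) //; lra.
have e2 : `|y.2 - x.2| <= 2 * M2 by rewrite (le_trans (ler_normB _ _)) //; lra.
have s1 : (y.1 - x.1) * (y.1 - x.1) <= (2 * M1) ^+ 2.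
  by move: e1; rewrite ler_norml => /andP[l r]; nra.
have s2 : (y.2 - x.2) * (y.2 - x.2) <= (2 * M2) ^+ 2.
  by move: e2; rewrite ler_norml => /andP[l r]; nra.
nra.
Qed.
End S6.

Section S7. Local Open Scope classical_set_scope. Variable R : realType.
Local Notation sqrt := Num.sqrt.
Definition term (g x : R * R) : R := `|dot2 g x| / enorm2 x * sqrt (enorm2 x).

Lemma term_ge0 g x : 0 <= term g x.
Proof. by rewrite /term mulr_ge0 ?divr_ge0 ?sqrtr_ge0 ?en_ge0. Qed.

Lemma term_neg g x : term g (- x) = term g x.
Proof.
have e1 : dot2 g (- x) = - dot2 g x by rewrite /dot2 /=; ring.
have e2 : enorm2 (- x) = enorm2 x by rewrite /enorm2 /dot2 /=; congr sqrt; ring.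
by rewrite /term e1 e2 normrN.
Qed.

Lemma term_edge g p q : `|dot2 g (unit_tangent p q)| * sqrt (edist2 p q) = term g (q - p).
Proof.
rewrite /term /unit_tangent /edist2.
have -> : dot2 g ((enorm2 (q - p))^-1 *: (q - p)) = (enorm2 (q - p))^-1 * dot2 g (q - p).
  by rewrite /dot2 sc1 sc2; ring.
by rewrite normrM ger0_norm ?invr_ge0 ?en_ge0 // [_^-1 * _]mulrC.
Qed.

Lemma en_pos (u w : R * R) : cross u w != 0 -> 0 < enorm2 u /\ 0 < enorm2 w.
Proof.
move=> c0; split.
  rewrite lt_neqAle en_ge0 andbT eq_sym; apply: contraNneq c0 => /eqP.
  rewrite /enorm2 sqrtr_eq0 /dot2 => h.
  have h1 : u.1 = 0 by nra.
  have h2 : u.2 = 0 by nra.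
  by rewrite /cross h1 h2 !mul0r subrr.
rewrite lt_neqAle en_ge0 andbT eq_sym; apply: contraNneq c0 => /eqP.
rewrite /enorm2 sqrtr_eq0 /dot2 => h.
have h1 : w.1 = 0 by nra.
have h2 : w.2 = 0 by nra.
by rewrite /cross h1 h2 !mulr0 subrr.
Qed.

Lemma vertex_case (g u w : R * R) (h S : R) : cross u w != 0 ->
  enorm2 u <= h -> enorm2 w <= h -> term g u + term g w <= S ->
  sqrt (dot2 g g * `|cross u w| / 2) <=
  sqrt h / sqrt (2 * sin (acos (dot2 u w / (enorm2 u * enorm2 w)))) * S.
Proof.
move=> c0 Uh Wh HS.
have [U0 W0] := en_pos c0.
rewrite sin_angle //.
apply: (core (A := `|dot2 g u|) (B := `|dot2 g w|)) => //.
- by rewrite /dot2 addr_ge0 // -expr2 sqr_ge0.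
- exact: lag.
Qed.

Lemma max3 (x y z : R) : Num.max x (Num.max y z) = x \/ Num.max x (Num.max y z) = y \/
  Num.max x (Num.max y z) = z.
Proof.
rewrite /Num.max; by repeat case: ifP => _; auto.
Qed.
End S7.

Unset Implicit Arguments.
Theorem lemmaC1 (R : realType) (a1 a2 a3 : R * R) (v : R * R -> R) :
  nondegenerate_tri a1 a2 a3 -> P1 v ->
  let T := triangle a1 a2 a3 in
  let hT := set_diameter T in
  let thM := max_angle a1 a2 a3 in
  L2norm_vec T (grad2 v) <=
    Num.sqrt hT / Num.sqrt (2 * sin thM) *
    (L2norm_edge a2 a3 (fun x => dot2 (grad2 v x) (unit_tangent a2 a3)) +
     L2norm_edge a3 a1 (fun x => dot2 (grad2 v x) (unit_tangent a3 a1)) +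
     L2norm_edge a1 a2 (fun x => dot2 (grad2 v x) (unit_tangent a1 a2))).
Proof.
move=> ND [g1 [g2 [k hv]]]; cbv zeta.
have ev : v = fun y => g1 * y.1 + g2 * y.2 + k by apply/funext.
have gv : grad2 v = fun _ => (g1, g2).
  by apply/funext => x; rewrite /grad2 ev !derive_aff /= !mulr1 !mulr0 addr0 add0r.
rewrite gv !edge_val !term_edge.
set g := (g1, g2).
have D0 : Dt a1 a2 a3 != 0 by exact: ND.
apply: le_trans (lhs_bound g ND (meas_tri D0) (tri_meas D0)) _.
have [V1 V2 V3] := vert_in a1 a2 a3.
have t0 := term_ge0 g.
case: (max3 (angle_at a1 a2 a3) (angle_at a2 a3 a1) (angle_at a3 a1 a2)) => [|[]] E;
  rewrite /max_angle E /angle_at.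
- rewrite (_ : _ * _ - _ = cross (a2 - a1) (a3 - a1)); last by [].
  apply: vertex_case.
  + exact: D0.
  + exact: (diam_ge V1 V2).
  + exact: (diam_ge V1 V3).
  + rewrite -(term_neg g (a3 - a1)) opprB.
    have := t0 (a3 - a2); lra.
- rewrite (_ : _ * _ - _ = cross (a3 - a2) (a1 - a2)); last by rewrite /cross /=; ring.
  apply: vertex_case.
  + by rewrite /cross /=; move: D0; rewrite /Dt (_ : _ * _ - _ = (a2.1 - a1.1) * (a3.2 - a1.2) - (a2.2 - a1.2) * (a3.1 - a1.1)) //; ring.
  + exact: (diam_ge V2 V3).
  + exact: (diam_ge V2 V1).
  + rewrite -(term_neg g (a1 - a2)) opprB.
    have := t0 (a1 - a3); lra.
- rewrite (_ : _ * _ - _ = cross (a1 - a3) (a2 - a3)); last by rewrite /cross /=; ring.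
  apply: vertex_case.
  + by rewrite /cross /=; move: D0; rewrite /Dt (_ : _ * _ - _ = (a2.1 - a1.1) * (a3.2 - a1.2) - (a2.2 - a1.2) * (a3.1 - a1.1)) //; ring.
  + exact: (diam_ge V3 V1).
  + exact: (diam_ge V3 V2).
  + rewrite -(term_neg g (a2 - a3)) opprB.
    have := t0 (a2 - a1); lra.
Qed.
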